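(* Let $b,N,K,\Delta,R,L_0,L$ be positive integers with $2\le\Delta\le R-K<b-K-2$ and $\log_2N<K\le L_0\le L<b-\log_2(b+10)$. All configurations below are configurations over a fixed set of $N$ levels as in the context (with $z<2^b$). Then: (1) If a configuration consists of exactly one significand, in level $\lambda$, then $G=L_0+1-b-\lambda$ satisfies $2^K\le A(G)<2^b$. (2) Let $C$ be a configuration and $C'$ the configuration obtained by adding one significand to level $\ell$; write $SS'_\ell$, $A'_\ell(\cdot)$, $A'(\cdot)$ for the quantities of $C'$ and $A(\cdot)$ for those of $C$. Let $G$ be an integer with $A(G)<2^b$. (a) If $A'_\ell(G)\ge 2^b$, then $G_\downarrow=R-\lfloor\log_2 SS'_\ell\rfloor-\ell$ satisfies $2^K\le A'(G_\downarrow)<2^b$. (b) If $A'_\ell(G)<2^b$ but $A'(G)\ge 2^b$, then $G_\downarrow=G-\Delta$ satisfies $2^K\le A'(G_\downarrow)<2^b$. (3) If $C'$ is obtained from $C$ by removing significands, then $A'(G)\le A(G)$ for every integer $G$; in particular $A(G)<2^b$ implies $A'(G)<2^b$. (4) For any nonempty configuration with largest nonempty level $\lambda$, let $H_r=\lfloor SS_{\lambda-r}/2^b\rfloor$ for $r=0,\dots,b$, $E=\sum_{r=0}^b\lfloor H_r2^{-r+1}\rfloor$, $t=\lfloor\log_2\max\{E,1\}\rfloor$, and $G_\uparrow=L+1-b-t-\lambda$. Then $2^L\le A(G_\uparrow)<2^b$.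
   Context: Fix an integer $b\ge 2$. There is a set $\mathcal L$ of $N$ levels, which are consecutive integers. Each level $\ell$ holds a finite (possibly empty) multiset of normalized significands, each an integer in $[2^{b-1},2^b)$. Let $z$ be the total number of stored significands over all levels; assume $z<2^b$. For each level, $SS_\ell$ is the sum of its significands (so $SS_\ell=0$ iff the level is empty); set $SS_\ell=0$ for integers $\ell\notin\mathcal L$. The level weight is $W_\ell=SS_\ell2^\ell$. For an integer global shift $G$, $A_\ell(G)=\lfloor W_\ell2^G\rfloor+1$ if $SS_\ell>0$ and $A_\ell(G)=0$ if $SS_\ell=0$; $A(G)=\sum_\ell A_\ell(G)$ and $M(G)=\sum_\ell W_\ell2^G$. The configuration is nonempty if $z\ge1$. (In the paper's terminology a shift $G$ is safe if $A(G)<2^b$, good if $A(G)\ge2^K$, strongly good if $A(G)\ge 2^L$.) *)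

(* Defs.v *)
From mathcomp Require Import all_boot all_order all_algebra.
From Stdlib Require Rdefinitions Rpower Raxioms.
Set Implicit Arguments. Unset Strict Implicit. Unset Printing Implicit Defensive.
Import Order.TTheory GRing.Theory Num.Theory.
Local Open Scope ring_scope.

Definition log2R (x : Rdefinitions.R) : Rdefinitions.R :=
  Rdefinitions.Rdiv (Rpower.ln x) (Rpower.ln (Rdefinitions.IZR (BinNums.Zpos (BinNums.xO BinNums.xH)))).

Definition in_levels (m0 : int) (N : nat) (l : int) : bool :=
  (m0 <= l) && (l < m0 + N%:Z).

(* A configuration assigns to each integer level a multiset (seq) of significands. *)
Definition config := int -> seq nat.

Definition zcount (m0 : int) (N : nat) (C : config) : nat :=
  (\sum_(i < N) size (C (m0 + i%:Z)%R))%N.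

Definition valid_config (b : nat) (m0 : int) (N : nat) (C : config) : Prop :=
  [/\ (forall l, ~~ in_levels m0 N l -> C l = [::]),
      (forall l s, s \in C l -> (2 ^ b.-1 <= s < 2 ^ b)%N)
    & (zcount m0 N C < 2 ^ b)%N].

Definition SS (C : config) (l : int) : nat := (\sum_(s <- C l) s)%N.

Definition A_lvl (C : config) (l G : int) : int :=
  if SS C l == 0%N then 0
  else Num.floor (((SS C l)%:R * (2%:R : rat) ^ l) * (2%:R : rat) ^ G) + 1.

Definition A_tot (m0 : int) (N : nat) (C : config) (G : int) : int :=
  \sum_(i < N) A_lvl C (m0 + i%:Z) G.

Definition add_sig (C C' : config) (l : int) (s : nat) : Prop :=
  C' l = s :: C l /\ forall l', l' != l -> C' l' = C l'.

Definition removed_from (C C' : config) : Prop :=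
  forall l x, (count_mem x (C' l) <= count_mem x (C l))%N.

Definition Hr (b : nat) (C : config) (lam : int) (r : nat) : nat :=
  (SS C (lam - r%:Z)%R %/ 2 ^ b)%N.
Definition Eval (b : nat) (C : config) (lam : int) : int :=
  \sum_(r < b.+1) Num.floor ((Hr b C lam r)%:R * (2%:R : rat) ^ (1 - r%:Z)).

(* Main.v *)
Require Import Defs.
From mathcomp Require Import all_boot all_order all_algebra.
From Stdlib Require Rdefinitions Rpower Raxioms.
From mathcomp Require Import lra zify ring.
From Stdlib Require RIneq Rfunctions Exp_prop.
Import Order.TTheory GRing.Theory Num.Theory.
Local Open Scope ring_scope.

Lemma sum_pick n (h : 'I_n -> int) l (c : rat) : injective h ->
 \sum_(i<n) (if h i == l then c else 0) = if [exists i, h i == l] then c else 0.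
Proof.
move=> hinj; case: ifP => [/existsP [i0 /eqP Hi0] | /negbT Hn].
- rewrite (bigD1 i0) //= Hi0 eqxx big1 ?addr0 // => j /negbTE Hj.
  case: eqP => // E; rewrite -Hi0 in E; by rewrite (hinj _ _ E) eqxx in Hj.
- rewrite big1 // => i _; case: eqP => // E.
  by move: Hn; rewrite negb_exists => /forallP /(_ i); rewrite E eqxx.
Qed.

Lemma ord_of_int n (a : int) : 0 <= a -> a < n%:Z -> exists i : 'I_n, i%:Z = a.
Proof.
move=> h1 h2; have hn : (`|a| < n)%N by lia.
by exists (Ordinal hn); rewrite /=; lia.
Qed.

Lemma reindex m0 N lam M (F : int -> rat) :
 (forall l, ~~ in_levels m0 N l -> F l = 0) ->
 (forall l, ~~ ((lam - M%:Z < l) && (l <= lam)) -> F l = 0) ->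
 \sum_(i<N) F (m0 + i%:Z) = \sum_(r<M) F (lam - r%:Z).
Proof.
move=> H1 H2.
have injr : injective (fun r : 'I_M => lam - r%:Z).
  by move=> r1 r2 E; apply: val_inj => /=; lia.
have inji : injective (fun i : 'I_N => m0 + i%:Z).
  by move=> r1 r2 E; apply: val_inj => /=; lia.
transitivity (\sum_(i<N) \sum_(r<M)
   (if lam - r%:Z == m0 + i%:Z then F (m0 + i%:Z) else 0)).
  apply: eq_bigr => i _; rewrite (@sum_pick M (fun r : 'I_M => lam - r%:Z)) //.
  case: ifP => // /negbT Hn; rewrite H2 //; apply/negP => /andP [h1 h2].
  have [r Hr] := @ord_of_int M (lam - (m0 + i%:Z)) (ltac:(lia)) (ltac:(lia)).
  move: Hn; rewrite negb_exists => /forallP /(_ r) /eqP; apply; lia.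
rewrite exchange_big /=; apply: eq_bigr => r _.
transitivity (\sum_(i<N) (if m0 + i%:Z == lam - r%:Z then F (lam - r%:Z) else 0)).
  apply: eq_bigr => i _; rewrite eq_sym; by case: eqP => // ->.
rewrite (@sum_pick N (fun i : 'I_N => m0 + i%:Z)) //.
case: ifP => // /negbT Hn; rewrite H1 //; apply/negP => /andP [h1 h2].
have [i Hi] := @ord_of_int N (lam - r%:Z - m0) (ltac:(lia)) (ltac:(lia)).
move: Hn; rewrite negb_exists => /forallP /(_ i) /eqP; apply; lia.
Qed.

Definition p2 (z : int) : rat := (2%:R : rat) ^ z.
Definition xl (C : config) (l G : int) : rat := (SS C l)%:R * p2 (l + G).
Definition X (m0 : int) (N : nat) (C : config) (G : int) : rat := \sum_(i<N) xl C (m0 + i%:Z) G.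

Lemma p2D a c : p2 (a + c) = p2 a * p2 c.
Proof. by rewrite /p2 expfzDr. Qed.
Lemma p2_gt0 a : 0 < p2 a.
Proof. by rewrite /p2 exprz_gt0. Qed.
Lemma p2n (n : nat) : p2 n%:Z = (2 ^ n)%N%:R.
Proof. by rewrite /p2 -exprnP natrX. Qed.
Lemma p2_le a c : a <= c -> p2 a <= p2 c.
Proof.
move=> h; have -> : c = a + (c - a) by ring.
rewrite p2D -{1}(mulr1 (p2 a)) ler_pM2l ?p2_gt0 //.
have -> : c - a = `|c - a|%N%:Z by lia.
by rewrite p2n ler1n expn_gt0.
Qed.
Lemma p2_lt a c : a < c -> p2 a * 2 <= p2 c.
Proof.
move=> h; have -> : 2 = p2 1 by rewrite /p2 expr1z.
rewrite -p2D; apply: p2_le; lia.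
Qed.

Lemma xl_ge0 C l G : 0 <= xl C l G.
Proof. by rewrite /xl mulr_ge0 // ltW // p2_gt0. Qed.

Lemma A_lvl_E C l G : A_lvl C l G = if SS C l == 0%N then 0 else Num.floor (xl C l G) + 1.
Proof. by rewrite /A_lvl /xl /p2 expfzDr ?mulrA. Qed.

Lemma A_lvl_ge0 C l G : 0 <= A_lvl C l G.
Proof.
rewrite A_lvl_E; case: ifP => // _.
have h : 0 <= Num.floor (xl C l G) by rewrite floor_ge0 xl_ge0.
lia.
Qed.

Lemma A_lvl_ge_x C l G : xl C l G <= (A_lvl C l G)%:~R.
Proof.
rewrite A_lvl_E; case: ifP => [/eqP h | _].
  by rewrite /xl h mul0r.
by have /andP [_ /ltW] := floor_itv (xl C l G).
Qed.

Lemma A_lvl_gt_x C l G : SS C l != 0%N -> xl C l G < (A_lvl C l G)%:~R.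
Proof.
rewrite A_lvl_E => /negbTE ->.
by have /andP [_ ] := floor_itv (xl C l G).
Qed.

Lemma A_lvl_le_x1 C l G : (A_lvl C l G)%:~R <= xl C l G + 1.
Proof.
rewrite A_lvl_E; case: ifP => [_ | _].
  by have := xl_ge0 C l G; lra.
have /andP [h _] := floor_itv (xl C l G).
by rewrite intrD lerD2r.
Qed.

Lemma A_tot_R m0 N C G : (A_tot m0 N C G)%:~R = \sum_(i<N) ((A_lvl C (m0 + i%:Z) G)%:~R : rat).
Proof. by rewrite /A_tot rmorph_sum. Qed.

Lemma A_tot_ge_X m0 N C G : X m0 N C G <= (A_tot m0 N C G)%:~R.
Proof. rewrite A_tot_R; apply: ler_sum => i _; exact: A_lvl_ge_x. Qed.

Lemma A_tot_le_XN m0 N C G : (A_tot m0 N C G)%:~R <= X m0 N C G + N%:R.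
Proof.
rewrite A_tot_R /X -[N in N%:R]card_ord -sumr_const -big_split /=.
apply: ler_sum => i _; exact: A_lvl_le_x1.
Qed.

Lemma A_tot_ge_lvl m0 N C G l : in_levels m0 N l -> A_lvl C l G <= A_tot m0 N C G.
Proof.
move=> /andP [h1 h2].
have [i Hi] : exists i : 'I_N, i%:Z = l - m0.
  have hn : (`|l - m0| < N)%N by lia.
  by exists (Ordinal hn); rewrite /=; lia.
rewrite /A_tot (bigD1 i) //=; have -> : m0 + i%:Z = l by lia.
rewrite lerDl.
by apply: sumr_ge0 => j _; exact: A_lvl_ge0.
Qed.

Lemma xl_shift C l (G d : int) : xl C l (G + d) = xl C l G * p2 d.
Proof. by rewrite /xl addrA !p2D !mulrA. Qed.

Lemma X_shift m0 N C (G d : int) : X m0 N C (G + d) = X m0 N C G * p2 d.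
Proof. rewrite /X mulr_suml; apply: eq_bigr => i _; exact: xl_shift. Qed.

Lemma p2_eq a c : a = c -> p2 a = p2 c.
Proof. by move=> ->. Qed.

Lemma p2Z (n : nat) : ((2%:Z ^+ n)%:~R : rat) = p2 n%:Z.
Proof. by rewrite rmorphXn /= p2n natrX. Qed.

Lemma nat_lt_p2 (n K : nat) : (n < 2 ^ K)%N -> (n%:R : rat) < p2 K%:Z.
Proof. by move=> h; rewrite p2n ltr_nat. Qed.

Lemma sum_sub (s s' : seq nat) :
  (forall x, count_mem x s' <= count_mem x s)%N ->
  (\sum_(x <- s') x <= \sum_(x <- s) x)%N.
Proof.
elim: s' s => [|a s' IH] s h; first by rewrite big_nil.
have ha : a \in s.
  by rewrite -has_pred1 has_count; have := h a; rewrite /= eqxx; lia.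
have hp := perm_to_rem ha.
rewrite big_cons (perm_big _ hp) big_cons leq_add2l; apply: IH => x.
have := h x; move/permP: hp => /(_ (pred1 x)) /= ->; lia.
Qed.

Lemma valid_out b m0 N C l : valid_config b m0 N C -> ~~ in_levels m0 N l -> SS C l = 0%N.
Proof. by case=> h _ _ hl; rewrite /SS h // big_nil. Qed.

Lemma valid_in b m0 N C l : valid_config b m0 N C -> C l != [::] -> in_levels m0 N l.
Proof. by case=> h _ _ hl; apply/negP => /negP /h; apply/eqP. Qed.

Lemma SS_ge b m0 N C l : valid_config b m0 N C -> C l != [::] -> (2 ^ b.-1 <= SS C l)%N.
Proof.
case=> _ h _; rewrite /SS; case E: (C l) => [|a s] // _.
have /andP [ha _] := h l a (ltac:(by rewrite E mem_head)).
by rewrite big_cons; apply: leq_trans ha (leq_addr _ _).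
Qed.

Lemma SS_le b m0 N C l : valid_config b m0 N C -> (SS C l <= size (C l) * 2 ^ b)%N.
Proof.
case=> _ h _; rewrite /SS; move: (h l); elim: (C l) => [|a s IH] hs; first by rewrite big_nil.
rewrite big_cons /= mulSn; apply: leq_add.
  by have /andP [_ /ltnW] := hs a (mem_head _ _).
by apply: IH => x hx; apply: hs; rewrite inE hx orbT.
Qed.

Lemma A_lvl_mono C C' l G : (SS C' l <= SS C l)%N -> A_lvl C' l G <= A_lvl C l G.
Proof.
move=> h; rewrite !A_lvl_E; case: ifP => [_ | /negbT h0]; first by have := A_lvl_ge0 C l G; rewrite A_lvl_E.
have -> : (SS C l == 0%N) = false by apply/negbTE; lia.
rewrite lerD2r; apply: le_floor; rewrite /xl ler_wpM2r ?ler_nat //; exact: ltW (p2_gt0 _).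
Qed.

Lemma part3 b m0 N (C C' : config) :
      valid_config b m0 N C -> valid_config b m0 N C' -> removed_from C C' ->
      forall G : int, A_tot m0 N C' G <= A_tot m0 N C G /\
                      (A_tot m0 N C G < 2%:Z ^+ b -> A_tot m0 N C' G < 2%:Z ^+ b).
Proof.
move=> _ _ hr G.
have h : A_tot m0 N C' G <= A_tot m0 N C G.
  by apply: ler_sum => i _; apply: A_lvl_mono; apply: sum_sub; apply: hr.
by split => // h2; apply: le_lt_trans h h2.
Qed.

Lemma injS m0 N : injective (fun i : 'I_N => m0 + i%:Z).
Proof. by move=> r1 r2 E; apply: val_inj => /=; lia. Qed.

Lemma part1 b N K L0 m0 : (N < 2^K)%N -> (K <= L0)%N -> (L0 + 4 <= b)%N ->
 forall C lam s, valid_config b m0 N C -> C lam = [:: s] -> (forall l, l != lam -> C l = [::]) ->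
 let G := L0%:Z + 1 - b%:Z - lam in 2%:Z ^+ K <= A_tot m0 N C G < 2%:Z ^+ b.
Proof.
move=> hNK hKL hLb C lam s hv hC ho; cbv zeta; set G := L0%:Z + 1 - b%:Z - lam.
have hSS : SS C lam = s by rewrite /SS hC big_seq1.
have hin : in_levels m0 N lam by apply: (@valid_in b m0 N C lam hv); rewrite hC.
have [hs1 hs2] : (2^b.-1 <= s)%N /\ (s < 2^b)%N.
  by case: hv => _ h _; have /andP[] := h lam s (ltac:(by rewrite hC mem_head)).
have hx : xl C lam G = s%:R * p2 (L0%:Z + 1 - b%:Z).
  by rewrite /xl hSS; congr (_ * _); apply: p2_eq; rewrite /G; lia.
have hX : X m0 N C G <= xl C lam G.
  rewrite /X (eq_bigr (fun i : 'I_N => if m0 + i%:Z == lam then xl C lam G else 0)).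
    rewrite (@sum_pick N _ lam _ (injS m0 N)).
    by case: ifP => // _; exact: xl_ge0.
  move=> i hi; case: eqP => [E | /eqP hne]; first by rewrite E.
  by rewrite /xl /SS ho // big_nil mul0r.
have hpc := p2_gt0 (L0%:Z + 1 - b%:Z).
apply/andP; split.
  rewrite -(ler_int rat) p2Z.
  have h1 := A_tot_ge_lvl m0 N C G lam hin; rewrite -(ler_int rat) in h1.
  have h2 := A_lvl_ge_x C lam G.
  have h3 : p2 L0%:Z <= xl C lam G.
    rewrite hx (_ : p2 L0%:Z = p2 (b.-1)%:Z * p2 (L0%:Z + 1 - b%:Z)); last first.
      by rewrite -p2D; apply: p2_eq; lia.
    by rewrite ler_pM2r // p2n ler_nat.
  have h4 : p2 K%:Z <= p2 L0%:Z by apply: p2_le; lia.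
  lra.
rewrite -(ltr_int rat) p2Z.
have h1 := A_tot_le_XN m0 N C G.
have h2 : xl C lam G < p2 (L0%:Z + 1).
  rewrite hx (_ : p2 (L0%:Z + 1) = p2 b%:Z * p2 (L0%:Z + 1 - b%:Z)); last first.
    by rewrite -p2D; apply: p2_eq; lia.
  by rewrite ltr_pM2r // p2n ltr_nat.
have h3 := nat_lt_p2 N K hNK.
have h4 : p2 (L0%:Z + 1) <= p2 (b%:Z - 2) by apply: p2_le; lia.
have h5 : p2 K%:Z <= p2 (b%:Z - 2) by apply: p2_le; lia.
have h6 : p2 (b%:Z - 2) * 2 <= p2 b%:Z by apply: p2_lt; lia.
lra.
Qed.

Lemma add_facts b m0 N C C' l s : valid_config b m0 N C' -> add_sig C C' l s ->
  [/\ SS C' l = (s + SS C l)%N, forall l', l' != l -> SS C' l' = SS C l',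
      in_levels m0 N l, (2^b.-1 <= s)%N & (s < 2^b)%N].
Proof.
move=> hv [h1 h2]; split.
- by rewrite /SS h1 big_cons.
- by move=> l' hl'; rewrite /SS h2.
- by apply: (@valid_in b m0 N C' l hv); rewrite h1.
- by case: hv => _ h _; have /andP[] := h l s (ltac:(by rewrite h1 mem_head)).
- by case: hv => _ h _; have /andP[] := h l s (ltac:(by rewrite h1 mem_head)).
Qed.

Arguments add_facts {b m0 N C C' l s}.

Lemma X_add b m0 N C C' l s G : valid_config b m0 N C' -> add_sig C C' l s ->
  X m0 N C' G <= X m0 N C G + s%:R * p2 (l + G).
Proof.
move=> hv ha; have [e1 e2 _ _ _] := add_facts hv ha.
rewrite /X (eq_bigr (fun i : 'I_N => xl C (m0 + i%:Z) G +
     (if m0 + i%:Z == l then s%:R * p2 (l + G) else 0))).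
  rewrite big_split /= (@sum_pick N _ l _ (injS m0 N)) lerD2l.
  by case: ifP => // _; rewrite mulr_ge0 // ltW // p2_gt0.
move=> i hi; case: eqP => [E | /eqP hne].
  by rewrite E /xl e1 natrD mulrDl addrC.
by rewrite /xl e2 // addr0.
Qed.

Arguments X_add {b m0 N C C' l s} G.

Lemma int_le1 (a : int) (n : nat) : a < 2%:Z ^+ n -> (a%:~R : rat) <= p2 n%:Z - 1.
Proof.
move=> h; have h' : a + 1 <= 2%:Z ^+ n by lia.
rewrite -(ler_int rat) p2Z intrD in h'; lra.
Qed.

Lemma int_ge (a : int) (n : nat) : 2%:Z ^+ n <= a -> p2 n%:Z <= (a%:~R : rat).
Proof. by rewrite -(ler_int rat) p2Z. Qed.

Arguments int_le1 {a n}.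
Arguments int_ge {a n}.

Lemma part2a b N K R m0 C C' l s G : (N < 2^K)%N -> (K <= R)%N -> (R + 3 <= b)%N ->
  valid_config b m0 N C' -> add_sig C C' l s ->
  A_tot m0 N C G < 2%:Z ^+ b ->
  2%:Z ^+ b <= A_lvl C' l G ->
  let Gd := R%:Z - (trunc_log 2 (SS C' l))%:Z - l in
  2%:Z ^+ K <= A_tot m0 N C' Gd < 2%:Z ^+ b.
Proof.
move=> hNK hKR hRb hv ha hA hAl; cbv zeta.
have [e1 e2 hin hs1 hs2] := add_facts hv ha.
set S' := SS C' l; set t := trunc_log 2 S'; set Gd := R%:Z - t%:Z - l.
have hS'pos : (0 < S')%N by rewrite /S' e1; have := expn_gt0 2 b.-1; lia.
have ht1 : (2 ^ t <= S')%N by apply: trunc_logP.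
have ht2 : (S' < 2 ^ t.+1)%N by apply: trunc_log_ltn.
have hpr := p2_gt0 (R%:Z - t%:Z).
have hxd : xl C' l Gd = S'%:R * p2 (R%:Z - t%:Z) by rewrite /xl; congr (_ * _); apply: p2_eq; rewrite /Gd; lia.
have hlow : p2 R%:Z <= xl C' l Gd.
  rewrite hxd (_ : p2 R%:Z = p2 t%:Z * p2 (R%:Z - t%:Z)); last by rewrite -p2D; apply: p2_eq; lia.
  by rewrite ler_pM2r // p2n ler_nat.
have hup : xl C' l Gd < p2 (R%:Z + 1).
  rewrite hxd (_ : p2 (R%:Z + 1) = p2 t.+1%:Z * p2 (R%:Z - t%:Z)); last by rewrite -p2D; apply: p2_eq; lia.
  by rewrite ltr_pM2r // p2n ltr_nat.
apply/andP; split.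
  rewrite -(ler_int rat) p2Z.
  have h1 := A_tot_ge_lvl m0 N C' Gd l hin; rewrite -(ler_int rat) in h1.
  have h2 := A_lvl_ge_x C' l Gd.
  have h4 : p2 K%:Z <= p2 R%:Z by apply: p2_le; lia.
  lra.
rewrite -(ltr_int rat) p2Z.
set q := p2 (Gd - G).
have hq := p2_gt0 (Gd - G).
have hGd : Gd = G + (Gd - G) by ring.
have hY : xl C' l Gd = xl C' l G * q by rewrite {1}hGd xl_shift.
have hX' : X m0 N C' Gd = X m0 N C' G * q by rewrite {1}hGd X_shift.
have hXa := X_add G hv ha.
have hXA := A_tot_ge_X m0 N C G.
have hA1 := int_le1 hA.
have hAl1 := int_ge hAl.
have hAl2 := A_lvl_le_x1 C' l G.
have hsY : s%:R * p2 (l + G) <= xl C' l G.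
  by rewrite /xl ler_wpM2r ?ler_nat ?(ltW (p2_gt0 _)) // /S' e1 leq_addr.
have hXq : X m0 N C' G * q <= xl C' l G * q * 2.
  rewrite -mulrA (mulrC q) mulrA ler_wpM2r ?(ltW hq) //; lra.
have hN := nat_lt_p2 N K hNK.
have hfin := A_tot_le_XN m0 N C' Gd.
have h5 : p2 (R%:Z + 1) * 2 <= p2 (b%:Z - 1) by apply: p2_lt; move: hRb; clear; lia.
have h6 : p2 K%:Z * 2 <= p2 (b%:Z - 1) by apply: p2_lt; move: hRb hKR; clear; lia.
have h7 : p2 (b%:Z - 1) * 2 <= p2 b%:Z by apply: p2_lt; move: hRb; clear; lia.
have hXd : X m0 N C' Gd < p2 (b%:Z - 1).
  rewrite hX'; apply: le_lt_trans hXq _; rewrite -hY.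
  move: hup h5; clear; lra.
have hpb := p2_gt0 (b%:Z - 1).
move: hXd hfin hN h6 h7 hpb; clear; lra.
Qed.

Lemma part2b b N K R Delta m0 C C' l s G : (N < 2^K)%N -> (K + Delta <= R)%N -> (R + 3 <= b)%N ->
  (2 <= Delta)%N ->
  valid_config b m0 N C' -> add_sig C C' l s ->
  A_tot m0 N C G < 2%:Z ^+ b ->
  A_lvl C' l G < 2%:Z ^+ b -> 2%:Z ^+ b <= A_tot m0 N C' G ->
  let Gd := G - Delta%:Z in
  2%:Z ^+ K <= A_tot m0 N C' Gd < 2%:Z ^+ b.
Proof.
move=> hNK hKR hRb hD hv ha hA hAl hA'; cbv zeta.
have [e1 e2 hin hs1 hs2] := add_facts hv ha.
set q := p2 (- Delta%:Z).
have hq := p2_gt0 (- Delta%:Z).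
have hq1 : q <= 1 by rewrite /q (_ : 1 = p2 0) ?p2_le //; move: hD; clear; lia.
have hX' : X m0 N C' (G - Delta%:Z) = X m0 N C' G * q by rewrite X_shift.
have hbq : p2 b%:Z * q = p2 (b%:Z - Delta%:Z) by rewrite /q -p2D.
have hKq : p2 K%:Z * q <= p2 K%:Z by rewrite /q -p2D; apply: p2_le; move: hD; clear; lia.
have hN := nat_lt_p2 N K hNK.
have hpK := p2_gt0 K%:Z.
have hb1 : p2 K%:Z * 2 <= p2 (b%:Z - Delta%:Z) by apply: p2_lt; move: hRb hKR; clear; lia.
have hb2 : p2 (b%:Z - Delta%:Z) * 2 <= p2 (b%:Z - 1) by apply: p2_lt; move: hRb hKR hD; clear; lia.
have hb3 : p2 K%:Z * 2 <= p2 (b%:Z - 1) by apply: p2_lt; move: hRb hKR; clear; lia.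
have hb4 : p2 (b%:Z - 1) * 2 <= p2 b%:Z by apply: p2_lt; move: hRb; clear; lia.
have hpb := p2_gt0 (b%:Z - 1).
apply/andP; split.
  rewrite -(ler_int rat) p2Z.
  have h1 := A_tot_ge_X m0 N C' (G - Delta%:Z).
  have h2 := A_tot_le_XN m0 N C' G.
  have h3 := int_ge hA'.
  have h4 : (p2 b%:Z - p2 K%:Z) * q <= X m0 N C' G * q.
    by rewrite ler_wpM2r ?(ltW hq) //; move: h2 h3 hN; clear; lra.
  rewrite mulrBl hbq in h4.
  move: h1 hX' h4 hKq hb1; clear; lra.
rewrite -(ltr_int rat) p2Z.
have hXa := X_add G hv ha.
have hXA := A_tot_ge_X m0 N C G.
have hA1 := int_le1 hA.
have hAl1 := int_le1 hAl.
have hAl2 := A_lvl_ge_x C' l G.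
have hsY : s%:R * p2 (l + G) <= xl C' l G.
  by rewrite /xl ler_wpM2r ?ler_nat ?(ltW (p2_gt0 _)) // e1 leq_addr.
have hX2 : X m0 N C' G <= p2 b%:Z * 2.
  move: hXa hXA hA1 hAl1 hAl2 hsY; clear; lra.
have hX3 : X m0 N C' G * q <= p2 b%:Z * 2 * q by rewrite ler_wpM2r ?(ltW hq).
rewrite -mulrA (mulrC 2) mulrA hbq in hX3.
have hfin := A_tot_le_XN m0 N C' (G - Delta%:Z).
move: hX' hX3 hfin hN hb2 hb3 hb4 hpb; clear; lra.
Qed.

Lemma geo n : \sum_(r<n) p2 (1 - r%:Z) <= 4.
Proof.
suff -> : \sum_(r<n) p2 (1 - r%:Z) = 4 - p2 (2 - n%:Z).
  by have := p2_gt0 (2 - n%:Z); lra.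
elim: n => [|n IH]; first by rewrite big_ord0 /p2 /=; lra.
rewrite big_ord_recr /= IH.
have -> : p2 (2 - n%:Z) = p2 (1 - n%:Z) * 2.
  by rewrite (_ : 2 = p2 1) // -p2D; apply: p2_eq; lia.
have -> : p2 (2 - n.+1%:Z) = p2 (1 - n%:Z) by apply: p2_eq; lia.
lra.
Qed.

Lemma part4 b N K L m0 : (N < 2^K)%N -> (K <= L)%N -> ((b + 10) * 2^L < 2^b)%N ->
 forall C lam, valid_config b m0 N C -> (1 <= zcount m0 N C)%N ->
      in_levels m0 N lam -> C lam != [::] ->
      (forall l, lam < l -> C l = [::]) ->
      let t := trunc_log 2 `|Num.max (Eval b C lam) 1|%N in
      let Gu := L%:Z + 1 - b%:Z - t%:Z - lam in
      2%:Z ^+ L <= A_tot m0 N C Gu < 2%:Z ^+ b.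
Proof.
move=> hNK hKL hbL C lam hv _ hin hne habove; cbv zeta.
set E := Eval b C lam.
set t := trunc_log 2 _.
set Gu := L%:Z + 1 - b%:Z - t%:Z - lam.
have hSSa : forall l, lam < l -> SS C l = 0%N by move=> l hl; rewrite /SS habove // big_nil.
have hSSo : forall l, ~~ in_levels m0 N l -> SS C l = 0%N by move=> l; apply: valid_out hv.
pose M := (b.+1 + N)%N.
have hre : forall F : int -> rat, (forall l, SS C l = 0%N -> F l = 0) ->
    \sum_(i<N) F (m0 + i%:Z) = \sum_(r<b.+1) F (lam - r%:Z) + \sum_(r<N) F (lam - (b.+1 + r)%N%:Z).
  move=> F hF; rewrite (@reindex m0 N lam M F).
  - by rewrite /M big_split_ord /=.
  - by move=> l hl; apply: hF; apply: hSSo.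
  - move=> l hl; apply: hF; case: (ltrP lam l) => h; first exact: hSSa.
    apply: hSSo; apply/negP => /andP [h1 h2]; move: hl h h1 h2 hin.
    rewrite /M /in_levels; clear; lia.
have hX : X m0 N C Gu = \sum_(r<b.+1) xl C (lam - r%:Z) Gu + \sum_(r<N) xl C (lam - (b.+1 + r)%N%:Z) Gu.
  by rewrite /X (hre (fun l => xl C l Gu)) // => l hl; rewrite /xl hl mul0r.
have hS2 : 0 <= \sum_(r<N) xl C (lam - (b.+1 + r)%N%:Z) Gu by apply: sumr_ge0 => r _; apply: xl_ge0.
have hterm : forall r : nat, xl C (lam - r%:Z) Gu = (SS C (lam - r%:Z))%:R * p2 (L%:Z + 1 - b%:Z - t%:Z - r%:Z).
  by move=> r; rewrite /xl; congr (_ * _); apply: p2_eq; rewrite /Gu; lia.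
have hEfl : (E%:~R : rat) <= \sum_(r<b.+1) (Hr b C lam r)%:R * p2 (1 - r%:Z).
  rewrite /E /Eval rmorph_sum; apply: ler_sum => r _; exact: floor_le.
have hE0 : 0 <= E.
  by rewrite /E /Eval; apply: sumr_ge0 => r _; rewrite floor_ge0 mulr_ge0 // ltW // p2_gt0.
have [hEu hEl] : (E%:~R : rat) < p2 (t.+1)%:Z /\ (1 <= E -> p2 t%:Z <= E%:~R).
  case: (lerP 1 E) => hE.
    have hm : `|Num.max E 1|%N = `|E|%N by rewrite max_l.
    have hE' : (0 < `|E|)%N by lia.
    have ht1 := trunc_logP (isT : (1 < 2)%N) hE'.
    have ht2 := trunc_log_ltn `|E|%N (isT : (1 < 2)%N).
    rewrite /t hm; have -> : E = `|E|%N%:Z by lia.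
    by rewrite !p2n !ler_nat !ltr_nat ht1 ht2.
  have ht : t = 0%N by rewrite /t max_r ?ltW.
  split => [|h]; last by move: h hE; clear; lia.
  have -> : E = 0 by lia.
  by rewrite ht p2_gt0.
have hb3 : (L + 3 < b)%N.
  have h8 : (2 ^ (L + 3) < 2 ^ b)%N.
    rewrite expnD mulnC; apply: leq_ltn_trans hbL; rewrite leq_mul2r.
    by apply/orP; right; rewrite (_ : 2 ^ 3 = 8)%N //; lia.
  by rewrite ltn_exp2l in h8.
set Q := p2 (L%:Z - t%:Z).
have hQ := p2_gt0 (L%:Z - t%:Z).
have e : forall r : nat, p2 b%:Z * p2 (L%:Z + 1 - b%:Z - t%:Z - r%:Z) = Q * p2 (1 - r%:Z).
  by move=> r; rewrite /Q -!p2D; apply: p2_eq; lia.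
have hS1low : Q * \sum_(r<b.+1) (Hr b C lam r)%:R * p2 (1 - r%:Z) <= \sum_(r<b.+1) xl C (lam - r%:Z) Gu.
  rewrite mulr_sumr; apply: ler_sum => r _; rewrite hterm.
  have h1 : ((Hr b C lam r) * 2^b)%N%:R <= (SS C (lam - r%:Z))%:R :> rat by rewrite ler_nat /Hr leq_divM.
  rewrite natrM -p2n in h1.
  rewrite mulrCA -e mulrA ler_wpM2r //; exact: ltW (p2_gt0 _).
have hXA := A_tot_ge_X m0 N C Gu.
apply/andP; split.
  rewrite -(ler_int rat) p2Z.
  case: (lerP 1 E) => hE.
    have h1 : Q * E%:~R <= Q * \sum_(r<b.+1) (Hr b C lam r)%:R * p2 (1 - r%:Z) by rewrite ler_wpM2l // ltW.
    have h2 : Q * p2 t%:Z <= Q * E%:~R by rewrite ler_wpM2l ?(ltW hQ) //; exact: hEl.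
    have h3 : Q * p2 t%:Z = p2 L%:Z by rewrite /Q -p2D; apply: p2_eq; lia.
    move: hXA hX hS2 hS1low h1 h2 h3; clear; lra.
  have ht : t = 0%N by rewrite /t max_r ?ltW.
  have h1 := A_tot_ge_lvl m0 N C Gu lam hin; rewrite -(ler_int rat) in h1.
  have h2 := A_lvl_ge_x C lam Gu.
  have h3 := hterm 0%N; rewrite subr0 in h3.
  have h4 := SS_ge b m0 N C lam hv hne.
  have h5 : p2 L%:Z <= xl C lam Gu.
    rewrite h3 (_ : p2 L%:Z = p2 (b.-1)%:Z * p2 (L%:Z + 1 - b%:Z - t%:Z - 0%N%:Z)); last first.
      by rewrite -p2D; apply: p2_eq; rewrite ht; move: hb3; clear; lia.
    by rewrite ler_wpM2r ?(ltW (p2_gt0 _)) // p2n ler_nat.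
  move: h1 h2 h5; clear; lra.
rewrite -(ltr_int rat) p2Z.
have hS1up : \sum_(r<b.+1) xl C (lam - r%:Z) Gu <= Q * (4 + (E%:~R + b.+1%:R)).
  have h0 : forall r : 'I_b.+1, xl C (lam - r%:Z) Gu <= Q * (p2 (1 - r%:Z) +
       ((Num.floor ((Hr b C lam r)%:R * p2 (1 - r%:Z)))%:~R + 1)).
    move=> r; rewrite hterm.
    have h1 : (SS C (lam - r%:Z) <= 2 ^ b + Hr b C lam r * 2 ^ b)%N.
      rewrite /Hr; have := ltn_pmod (SS C (lam - r%:Z)) (expn_gt0 2 b).
      have := divn_eq (SS C (lam - r%:Z)) (2 ^ b); lia.
    have h1' : (SS C (lam - r%:Z))%:R <= p2 b%:Z + (Hr b C lam r)%:R * p2 b%:Z.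
      by rewrite p2n -natrM -natrD ler_nat.
    have hf : (Hr b C lam r)%:R * p2 (1 - r%:Z) <= (Num.floor ((Hr b C lam r)%:R * p2 (1 - r%:Z)))%:~R + 1.
      by have /andP [_ /ltW] := floor_itv ((Hr b C lam r)%:R * p2 (1 - r%:Z)); rewrite intrD.
    apply: le_trans (_ : (p2 b%:Z + (Hr b C lam r)%:R * p2 b%:Z) * p2 (L%:Z + 1 - b%:Z - t%:Z - r%:Z) <= _).
      by rewrite ler_wpM2r ?(ltW (p2_gt0 _)) // h1'.
    rewrite mulrDl -mulrA e mulrCA -mulrDr ler_wpM2l ?(ltW hQ) // lerD2l.
    exact: hf.
  apply: le_trans (ler_sum _ (fun r _ => h0 r)) _.
  rewrite -mulr_sumr ler_wpM2l ?(ltW hQ) // big_split /= lerD ?geo //.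
  rewrite big_split /= sumr_const card_ord /E /Eval rmorph_sum /=.
  exact: lexx.
have hS2up : \sum_(r<N) xl C (lam - (b.+1 + r)%N%:Z) Gu <= Q.
  set P2 := p2 (L%:Z - t%:Z - 2 * b%:Z).
  have hP2 := p2_gt0 (L%:Z - t%:Z - 2 * b%:Z).
  apply: le_trans (_ : P2 * \sum_(r<N) (SS C (lam - (b.+1 + r)%N%:Z))%:R <= _).
    rewrite mulr_sumr; apply: ler_sum => r _; rewrite hterm mulrC ler_wpM2r //.
    by apply: p2_le; lia.
  have hsum : \sum_(r<N) (SS C (lam - (b.+1 + r)%N%:Z))%:R <= ((SS C (lam - 0%:Z))%:R : rat) * 0 + \sum_(i<N) (SS C (m0 + i%:Z))%:R.
    rewrite mulr0 add0r (hre (fun l => (SS C l)%:R)); last by move=> l ->.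
    by rewrite lerDr; apply: sumr_ge0 => r _; apply: ler0n.
  rewrite mulr0 add0r in hsum.
  have hz : (\sum_(i<N) SS C (m0 + i%:Z) <= zcount m0 N C * 2 ^ b)%N.
    rewrite /zcount big_distrl /=; apply: leq_sum => i _; exact: SS_le b m0 N C _ hv.
  have hz2 : (zcount m0 N C * 2 ^ b <= 2 ^ (2 * b))%N.
    case: hv => _ _ hz'; have -> : (2 ^ (2 * b) = 2 ^ b * 2 ^ b)%N by rewrite -expnD addnn mul2n.
    by rewrite leq_mul2r ltnW ?orbT.
  have hsum2 : ((\sum_(i<N) SS C (m0 + i%:Z))%:R : rat) <= p2 (2 * b)%N%:Z.
    by rewrite p2n ler_nat; apply: leq_trans hz hz2.
  apply: le_trans (_ : P2 * p2 (2 * b)%N%:Z <= _).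
    by rewrite ler_wpM2l ?(ltW hP2) //; apply: le_trans hsum _; rewrite -natr_sum; exact: hsum2.
  by rewrite /P2 /Q -p2D; apply: p2_le; lia.
have ht0 : (0 <= t%:Z)%R by [].
have hKL1 : (K%:Z <= L%:Z)%R by move: hKL; clear; lia.
have hQE : Q * E%:~R <= p2 L%:Z * 2.
  apply: le_trans (_ : Q * p2 t.+1%:Z <= _); first by rewrite ler_wpM2l ?ltW.
  by rewrite /Q (_ : 2 = p2 1) // -!p2D; apply: p2_le; move: ht0; clear; lia.
have hQL : Q <= p2 L%:Z by apply: p2_le; move: ht0; clear; lia.
have hQb : Q * b.+1%:R <= p2 L%:Z * b.+1%:R by rewrite ler_wpM2r.
have hfin : p2 L%:Z * (b.+1%:R + 9) < p2 b%:Z.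
  by rewrite p2n p2n -natrD addSnnS -natrM mulnC ltr_nat.
have hN := nat_lt_p2 N K hNK.
have hKL' : p2 K%:Z <= p2 L%:Z by apply: p2_le.
have hAX := A_tot_le_XN m0 N C Gu.
rewrite !mulrDr in hS1up.
rewrite mulrDr in hfin.
have hL0 := p2_gt0 L%:Z.
move: hAX hX hS1up hS2up hQE hQL hQb hfin hN hKL' hL0; clear; lra.
Qed.

Module RealStuff.
Import RIneq Rfunctions Rpower Exp_prop.
Lemma expn_pow (a n : nat) : (expn a n) = Nat.pow a n.
Proof. elim: n => [|n IH] //=; by rewrite expnS IH. Qed.

Section Reals.
Local Open Scope R_scope.

Lemma ln2_pos : 0 < ln 2.
Proof. apply: Rlt_trans (ln_lt_2); apply: Rinv_0_lt_compat; apply: Rlt_0_2. Qed.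

Lemma log2_lt (x : nat) (y : R) : (leq 1 x) -> log2R (INR x) < y -> INR x < Rpower 2 y.
Proof.
move=> hx h; rewrite /log2R in h.
have hx' : 0 < INR x by apply: lt_0_INR; apply/ssrnat.ltP.
apply: ln_lt_inv => //; first by rewrite /Rpower; apply: exp_pos.
rewrite /Rpower ln_exp.
have := ln2_pos => l2.
have -> : ln (INR x) = (ln (INR x) / ln 2) * ln 2.
  by field; apply: Rgt_not_eq.
by apply: Rmult_lt_compat_r.
Qed.

Lemma realN (N K : nat) : (leq 1 N) -> log2R (INR N) < INR K -> (leq (S N) (expn 2 K)).
Proof.
move=> hN h; have := @log2_lt N (INR K) hN h; rewrite Rpower_pow; last by apply: Rlt_0_2.
rewrite (_ : 2 = INR 2) // -pow_INR => /INR_lt /ssrnat.ltP; by rewrite expn_pow.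
Qed.

Lemma realL (b L : nat) : INR L < INR b - log2R (INR (addn b 10)) -> (leq (S (muln (addn b 10) (expn 2 L))) (expn 2 b)).
Proof.
move=> h.
have hpos : 0 < log2R (INR (addn b 10)).
  rewrite /log2R; apply: Rdiv_lt_0_compat; last exact: ln2_pos.
  rewrite -ln_1; apply: ln_increasing; first exact: Rlt_0_1.
  rewrite (_ : 1 = INR 1) //; apply: lt_INR; apply/ssrnat.ltP; by rewrite addnS addnS ltnS.
have hLb : (L < b)%coq_nat by apply: INR_lt; Stdlib.micromega.Lra.lra.
have h1 : log2R (INR (addn b 10)) < INR (subn b L).
  rewrite minus_INR; last by apply: Nat.lt_le_incl.
  Stdlib.micromega.Lra.lra.
have := @log2_lt (addn b 10) _ (ltac:(by rewrite addnS addnS ltnS)) h1.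
rewrite Rpower_pow; last by apply: Rlt_0_2.
rewrite (_ : 2 = INR 2) // -pow_INR => /INR_lt /ssrnat.ltP; rewrite -expn_pow => h2.
have hb : expn 2 b = muln (expn 2 (subn b L)) (expn 2 L).
  rewrite -expnD subnK //; apply/ssrnat.leP; by apply: Nat.lt_le_incl.
by rewrite hb ltn_pmul2r ?expn_gt0.
Qed.
End Reals.
End RealStuff.

Theorem mainTheorem10 (b N K Delta R L0 L : nat) (m0 : int) :
  (0 < b)%N -> (0 < N)%N -> (0 < K)%N -> (0 < Delta)%N -> (0 < R)%N ->
  (0 < L0)%N -> (0 < L)%N ->
  (2 <= Delta)%N ->
  Delta%:Z <= R%:Z - K%:Z ->
  R%:Z - K%:Z < b%:Z - K%:Z - 2 ->
  Rdefinitions.Rlt (log2R (Raxioms.INR N)) (Raxioms.INR K) ->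
  (K <= L0)%N -> (L0 <= L)%N ->
  Rdefinitions.Rlt (Raxioms.INR L) (Rdefinitions.Rminus (Raxioms.INR b) (log2R (Raxioms.INR (b + 10)%N))) ->
  (* (1) *)
  (forall (C : config) (lam : int) (s : nat),
      valid_config b m0 N C -> C lam = [:: s] ->
      (forall l, l != lam -> C l = [::]) ->
      let G := L0%:Z + 1 - b%:Z - lam in
      2%:Z ^+ K <= A_tot m0 N C G < 2%:Z ^+ b) /\
  (* (2) *)
  (forall (C C' : config) (l : int) (s : nat) (G : int),
      valid_config b m0 N C -> valid_config b m0 N C' -> add_sig C C' l s ->
      A_tot m0 N C G < 2%:Z ^+ b ->
      (2%:Z ^+ b <= A_lvl C' l G ->
         let Gd := R%:Z - (trunc_log 2 (SS C' l))%:Z - l in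
         2%:Z ^+ K <= A_tot m0 N C' Gd < 2%:Z ^+ b) /\
      (A_lvl C' l G < 2%:Z ^+ b -> 2%:Z ^+ b <= A_tot m0 N C' G ->
         let Gd := G - Delta%:Z in
         2%:Z ^+ K <= A_tot m0 N C' Gd < 2%:Z ^+ b)) /\
  (* (3) *)
  (forall (C C' : config),
      valid_config b m0 N C -> valid_config b m0 N C' -> removed_from C C' ->
      forall G : int, A_tot m0 N C' G <= A_tot m0 N C G /\
                      (A_tot m0 N C G < 2%:Z ^+ b -> A_tot m0 N C' G < 2%:Z ^+ b)) /\
  (* (4) *)
  (forall (C : config) (lam : int),
      valid_config b m0 N C -> (1 <= zcount m0 N C)%N ->
      in_levels m0 N lam -> C lam != [::] ->
      (forall l, lam < l -> C l = [::]) ->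
      let t := trunc_log 2 `|Num.max (Eval b C lam) 1|%N in
      let Gu := L%:Z + 1 - b%:Z - t%:Z - lam in
      2%:Z ^+ L <= A_tot m0 N C Gu < 2%:Z ^+ b).
Proof.

Proof.
move=> hb hN hK hD hR hL0 hL hD2 hDR hRb hlogN hKL0 hL0L hlogL.
have hNK : (N < 2 ^ K)%N := RealStuff.realN N K hN hlogN.
have hbL : ((b + 10) * 2 ^ L < 2 ^ b)%N := RealStuff.realL b L hlogL.
have hRb' : (R + 3 <= b)%N by move: hRb; clear; lia.
have hKD : (K + Delta <= R)%N by move: hDR; clear; lia.
have hb3 : (L + 3 < b)%N.
  have h8 : (2 ^ (L + 3) < 2 ^ b)%N.
    rewrite expnD mulnC; apply: leq_ltn_trans hbL; rewrite leq_mul2r.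
    by apply/orP; right; rewrite (_ : 2 ^ 3 = 8)%N //; lia.
  by rewrite ltn_exp2l in h8.
have hL4 : (L0 + 4 <= b)%N by move: hb3 hL0L; clear; lia.
have hKR : (K <= R)%N by move: hKD; clear; lia.
have hKL : (K <= L)%N by move: hKL0 hL0L; clear; lia.
split; [| split; [| split]].
- exact: (part1 b N K L0 m0 hNK hKL0 hL4).
- move=> C C' l s G hv hv' ha hA; split.
  + move=> hAl; exact: (part2a b N K R m0 C C' l s G hNK hKR hRb' hv' ha hA hAl).
  + move=> hAl hA'; exact: (part2b b N K R Delta m0 C C' l s G hNK hKD hRb' hD2 hv' ha hA hAl hA').
- move=> C C' hv hv' hr G; exact: (part3 b m0 N C C' hv hv' hr G).
- exact: (part4 b N K L m0 hNK hKL hbL).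
Qed.
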